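(* Assume $\ell=2$ and the IV model (exclusion, random assignment, consistency). Then for every full data law satisfying these assumptions and inducing an observed law $\mathcal P$, $$\max_{\mathbf v\in\mathcal V}\mathbf v^\top\mathbf p\;\le\;\mathrm{ATE}\;\le\;-\max_{\mathbf v\in\mathcal V}\mathbf v^\top\bar{\mathbf p},$$ and these bounds are sharp: for every observed law $\mathcal P$ induced by some full data law satisfying the assumptions, there exist full data laws satisfying the assumptions and inducing $\mathcal P$ whose ATE equals the lower bound and the upper bound, respectively.
   Context: IV setting: $D\in\{0,1\}$ treatment; $Y$ outcome with values $\gamma_0<\dots<\gamma_{n-1}$; instrument $Z\in\{0,1\}$; $[n]=\{0,\dots,n-1\}$. Potential outcomes $Y^{(d,z)}$, potential treatments $D^{(z)}$. Assumptions: (Exclusion) $Y^{(d,0)}=Y^{(d,1)}$ a.s., written $Y^{(d)}$; (Random assignment) $Z\perp(Y^{(0)},Y^{(1)},D^{(0)},D^{(1)})$; (Consistency) $Y=(1-D)Y^{(0)}+DY^{(1)}$, $D=\mathbb 1(Z=0)D^{(0)}+\mathbb 1(Z=1)D^{(1)}$. A full data law is a joint law of $(Y^{(0)},Y^{(1)},D^{(0)},D^{(1)},Z)$; it induces the observed law $\mathcal P$ of $(Y,D,Z)$, assumed to have $\mathcal P(Z=z)>0$. $\mathrm{ATE}=\mathbb E[Y^{(1)}-Y^{(0)}]$. Vectors $\mathbf p,\bar{\mathbf p}\in\mathbb R^{4n}$ have entries $p_{ydz}=\mathcal P(Y=\gamma_y,D=d\mid Z=z)$ and $\bar p_{ydz}=p_{y(1-d)z}$;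 $\mathbf v^\top\mathbf p=\sum_{y,d,z}v_{ydz}p_{ydz}$. The set $\mathcal V=\{\mathbf u(\mathbf B):\mathbf B\in S\}\subset\mathbb R^{4n}$ is defined as follows. $S=S_1\cup S_2\cup S_3\subseteq\{0,1\}^{n\times2\times2}$: $\mathbf B\in S_1$ iff some $t\in\{0,\dots,n-2\}$ has $B_{i00}=B_{i01}=1$ for $i\ge t$ and $B_{i00}\ne B_{i01}$ for $i<t$, $B_{i10}\ne B_{i11}$ for all $i$, and some $i,j$ have $B_{i10}=B_{j11}=1$; $\mathbf B\in S_2$ iff $B_{(n-1)00}=B_{(n-1)01}=B_{010}=B_{011}=1$, $B_{i00}\ne B_{i01}$ for $i<n-1$, $B_{j10}\ne B_{j11}$ for $j>0$; $\mathbf B\in S_3$ iff some $t\in\{1,\dots,n-1\}$ has $B_{i10}=B_{i11}=1$ for $i\le t$ and $B_{i10}\ne B_{i11}$ for $i>t$, $B_{i00}\ne B_{i01}$ for all $i$, and some $i,j$ have $B_{i00}=B_{j01}=1$. Set $\alpha=-\gamma_0-\gamma_t$ on $S_1$, $\alpha=-\gamma_0-\gamma_{n-1}$ on $S_2$, $\alpha=-\gamma_t-\gamma_{n-1}$ on $S_3$, and: $u_{i00}=-\gamma_i-\alpha$ if $B_{i00}=1$ else $\gamma_0$; $u_{i10}=\gamma_i$ if $B_{i10}=1$ else $-\gamma_{n-1}-\alpha$; $u_{i01}=-\gamma_i$ if $B_{i01}=1$ else $\gamma_0+\alpha$; $u_{i11}=\gamma_i+\alpha$ if $B_{i11}=1$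 else $-\gamma_{n-1}$. *)

(* Defs.v *)
(* Discrete IV model with binary treatment D, binary instrument Z,
   outcome Y taking values gam 0 < ... < gam (n-1) (indexed by 'I_n). *)
From mathcomp Require Import all_boot all_order all_algebra.
Set Implicit Arguments. Unset Strict Implicit. Unset Printing Implicit Defensive.
Import Order.TTheory GRing.Theory Num.Theory.
Local Open Scope ring_scope.

(* A full data law: joint pmf of (Y^(0), Y^(1), D^(0), D^(1), Z), where the
   potential outcomes Y^(d) are already the exclusion-restricted ones
   (Y^(d,0) = Y^(d,1) a.s.); outcome values are indices y : 'I_n standing for gam y.
   Booleans encode {0,1} (true = 1). Argument order: q y0 y1 d0 d1 z. *)
Definition fdlaw (R : realFieldType) (n : nat) :=
  'I_n -> 'I_n -> bool -> bool -> bool -> R.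

Definition is_law {R : realFieldType} {n : nat} (q : fdlaw R n) : Prop :=
  (forall y0 y1 d0 d1 z, 0 <= q y0 y1 d0 d1 z) /\
  \sum_(y0 < n) \sum_(y1 < n) \sum_(d0 : bool) \sum_(d1 : bool) \sum_(z : bool)
      q y0 y1 d0 d1 z = 1.

Definition pZ {R : realFieldType} {n : nat} (q : fdlaw R n) (z : bool) : R :=
  \sum_(y0 < n) \sum_(y1 < n) \sum_(d0 : bool) \sum_(d1 : bool) q y0 y1 d0 d1 z.

Definition pU {R : realFieldType} {n : nat} (q : fdlaw R n) y0 y1 d0 d1 : R :=
  \sum_(z : bool) q y0 y1 d0 d1 z.

Definition rand_assign {R : realFieldType} {n : nat} (q : fdlaw R n) : Prop :=
  forall y0 y1 d0 d1 z, q y0 y1 d0 d1 z = pU q y0 y1 d0 d1 * pZ q z.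

(* Full data law satisfying the IV assumptions (exclusion is built into the
   parametrization, consistency into the observation map below). *)
Definition valid_law {R : realFieldType} {n : nat} (q : fdlaw R n) : Prop :=
  is_law q /\ rand_assign q.

Definition Dobs (d0 d1 z : bool) : bool := if z then d1 else d0.
Definition Yobs {n : nat} (y0 y1 : 'I_n) (d : bool) : 'I_n := if d then y1 else y0.

Definition obs {R : realFieldType} {n : nat} (q : fdlaw R n) (y : 'I_n) (d z : bool) : R :=
  \sum_(y0 < n) \sum_(y1 < n) \sum_(d0 : bool) \sum_(d1 : bool)
    (if (Dobs d0 d1 z == d) && (Yobs y0 y1 (Dobs d0 d1 z) == y)
     then q y0 y1 d0 d1 z else 0).

Definition pvec {R : realFieldType} {n : nat} (q : fdlaw R n) (y : 'I_n) (d z : bool) : R :=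
  obs q y d z / pZ q z.

Definition pbar {R : realFieldType} {n : nat} (q : fdlaw R n) (y : 'I_n) (d z : bool) : R :=
  pvec q y (~~ d) z.

Definition ATE {R : realFieldType} {n : nat} (gam : nat -> R) (q : fdlaw R n) : R :=
  \sum_(y0 < n) \sum_(y1 < n) \sum_(d0 : bool) \sum_(d1 : bool) \sum_(z : bool)
      q y0 y1 d0 d1 z * (gam y1 - gam y0).

Definition vec4 (R : realFieldType) (n : nat) := 'I_n -> bool -> bool -> R.

Definition dot {R : realFieldType} {n : nat} (v w : vec4 R n) : R :=
  \sum_(y < n) \sum_(d : bool) \sum_(z : bool) v y d z * w y d z.

Definition bmat (n : nat) := 'I_n -> bool -> bool -> bool.

Definition inS1 {n : nat} (B : bmat n) (t : nat) : Prop :=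
  (t.+2 <= n)%N /\
  (forall i : 'I_n, (t <= i)%N -> B i false false && B i false true) /\
  (forall i : 'I_n, (i < t)%N -> B i false false != B i false true) /\
  (forall i : 'I_n, B i true false != B i true true) /\
  (exists i j : 'I_n, B i true false && B j true true).

Definition inS2 {n : nat} (B : bmat n) : Prop :=
  (forall i : 'I_n, (i : nat) = n.-1 -> B i false false && B i false true) /\
  (forall i : 'I_n, (i : nat) = 0%N -> B i true false && B i true true) /\
  (forall i : 'I_n, (i < n.-1)%N -> B i false false != B i false true) /\
  (forall j : 'I_n, (0 < j)%N -> B j true false != B j true true).

Definition inS3 {n : nat} (B : bmat n) (t : nat) : Prop :=
  (0 < t)%N /\ (t <= n.-1)%N /\
  (forall i : 'I_n, (i <= t)%N -> B i true false && B i true true) /\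
  (forall i : 'I_n, (t < i)%N -> B i true false != B i true true) /\
  (forall i : 'I_n, B i false false != B i false true) /\
  (exists i j : 'I_n, B i false false && B j false true).

Definition uvec {R : realFieldType} {n : nat} (gam : nat -> R) (B : bmat n) (alpha : R)
  : vec4 R n := fun i d z =>
  match d, z with
  | false, false => if B i false false then - gam i - alpha else gam 0%N
  | true,  false => if B i true false then gam i else - gam n.-1 - alpha
  | false, true  => if B i false true then - gam i else gam 0%N + alpha
  | true,  true  => if B i true true then gam i + alpha else - gam n.-1
  end.

Definition inV {R : realFieldType} {n : nat} (gam : nat -> R) (v : vec4 R n) : Prop :=
  exists B : bmat n,
    (exists t, inS1 B t /\ forall y d z, v y d z = uvec gam B (- gam 0%N - gam t) y d z) \/
    (inS2 B /\ forall y d z, v y d z = uvec gam B (- gam 0%N - gam n.-1) y d z) \/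
    (exists t, inS3 B t /\ forall y d z, v y d z = uvec gam B (- gam t - gam n.-1) y d z).

(* Main.v *)
Require Import Defs.
From mathcomp Require Import all_boot all_order all_algebra.
From mathcomp Require Import ring lra zify.
Set Implicit Arguments. Unset Strict Implicit. Unset Printing Implicit Defensive.
Import Order.TTheory GRing.Theory Num.Theory.
Local Open Scope ring_scope.

Section Sums.
Variable R : realFieldType.
Variable n : nat.

Lemma sum_if_const (I : finType) (b : bool) (F : I -> R) :
  \sum_(i : I) (if b then F i else 0) = if b then \sum_i F i else 0.
Proof. by case: b => //; rewrite big1. Qed.

Lemma sum_if_eq (j : 'I_n) (F : 'I_n -> R) :
  \sum_(i < n) (if i == j then F i else 0) = F j.
Proof. by rewrite -big_mkcond big_pred1_eq. Qed.

Lemma sum_bool_neg (F : bool -> R) : \sum_(d : bool) F (~~ d) = \sum_(d : bool) F d.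
Proof. by rewrite !big_bool /= addrC. Qed.

Lemma obs00 (q : fdlaw R n) y :
  obs q y false false = \sum_(y1 < n) \sum_(d1 : bool) q y y1 false d1 false.
Proof.
rewrite /obs /=.
under eq_bigr => y0 _ do under eq_bigr => y1 _ do rewrite big_bool /= big1 // add0r sum_if_const.
under eq_bigr => y0 _ do rewrite sum_if_const.
exact: sum_if_eq.
Qed.

Lemma obs10 (q : fdlaw R n) y :
  obs q y true false = \sum_(y0 < n) \sum_(d1 : bool) q y0 y true d1 false.
Proof.
rewrite /obs /=.
apply: eq_bigr => y0 _.
under eq_bigr => y1 _ do rewrite big_bool /= [X in _ + X]big1 // addr0 sum_if_const.
exact: sum_if_eq.
Qed.

Lemma obs01 (q : fdlaw R n) y :
  obs q y false true = \sum_(y1 < n) \sum_(d0 : bool) q y y1 d0 false true.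
Proof.
rewrite /obs /=.
under eq_bigr => y0 _ do under eq_bigr => y1 _ do under eq_bigr => d0 _ do rewrite big_bool /= add0r.
under eq_bigr => y0 _ do under eq_bigr => y1 _ do rewrite sum_if_const.
under eq_bigr => y0 _ do rewrite sum_if_const.
exact: sum_if_eq.
Qed.

Lemma obs11 (q : fdlaw R n) y :
  obs q y true true = \sum_(y0 < n) \sum_(d0 : bool) q y0 y d0 true true.
Proof.
rewrite /obs /=.
apply: eq_bigr => y0 _.
under eq_bigr => y1 _ do under eq_bigr => d0 _ do rewrite big_bool /= addr0.
under eq_bigr => y1 _ do rewrite sum_if_const.
exact: sum_if_eq.
Qed.


Definition fdW := 'I_n -> 'I_n -> bool -> bool -> R.
Definition E (W : fdW) : vec4 R n := fun y d z => obs (fun a b c e (_ : bool) => W a b c e) y d z.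
Definition sumW (F : fdW) : R :=
  \sum_(y0 < n) \sum_(y1 < n) \sum_(d0 : bool) \sum_(d1 : bool) F y0 y1 d0 d1.
Definition cv (v : vec4 R n) (y0 y1 : 'I_n) (d0 d1 : bool) : R :=
  v (Yobs y0 y1 d0) d0 false + v (Yobs y0 y1 d1) d1 true.

Lemma sum_mulr_in (I : finType) (F : I -> R) (k : R) :
  \sum_i F i * k = k * \sum_i F i.
Proof. by rewrite mulr_sumr; apply: eq_bigr => i _; rewrite mulrC. Qed.

Lemma dotA0 (W : fdW) (v : vec4 R n) :
  sumW (fun a b c e => W a b c e * v (Yobs a b c) c false) =
  \sum_(y < n) v y false false * E W y false false +
  \sum_(y < n) v y true false * E W y true false.
Proof.
rewrite /sumW /E.
under eq_bigr => a _ do under eq_bigr => b _ do rewrite big_bool /=.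
under eq_bigr => a _ do rewrite big_split /=.
rewrite big_split /= addrC; congr (_ + _).
- apply: eq_bigr => y _; rewrite obs00 mulr_sumr; apply: eq_bigr => b _.
  by rewrite sum_mulr_in.
- rewrite exchange_big; apply: eq_bigr => y _; rewrite obs10 mulr_sumr; apply: eq_bigr => b _.
  by rewrite sum_mulr_in.
Qed.

Lemma dotA1 (W : fdW) (v : vec4 R n) :
  sumW (fun a b c e => W a b c e * v (Yobs a b e) e true) =
  \sum_(y < n) v y false true * E W y false true +
  \sum_(y < n) v y true true * E W y true true.
Proof.
rewrite /sumW /E.
under eq_bigr => a _ do under eq_bigr => b _ do rewrite exchange_big big_bool /=.
under eq_bigr => a _ do rewrite big_split /=.
rewrite big_split /= addrC; congr (_ + _).
- apply: eq_bigr => y _; rewrite obs01 mulr_sumr; apply: eq_bigr => b _.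
  by rewrite sum_mulr_in.
- rewrite exchange_big; apply: eq_bigr => y _; rewrite obs11 mulr_sumr; apply: eq_bigr => b _.
  by rewrite sum_mulr_in.
Qed.

Lemma dot_E (W : fdW) (v : vec4 R n) :
  dot v (E W) = sumW (fun a b c e => W a b c e * cv v a b c e).
Proof.
have -> : sumW (fun a b c e => W a b c e * cv v a b c e) =
  sumW (fun a b c e => W a b c e * v (Yobs a b c) c false) +
  sumW (fun a b c e => W a b c e * v (Yobs a b e) e true).
  rewrite /sumW -big_split; apply: eq_bigr => a _; rewrite -big_split; apply: eq_bigr => b _.
  rewrite -big_split; apply: eq_bigr => c _; rewrite -big_split; apply: eq_bigr => e _.
  by rewrite /cv mulrDr.
rewrite dotA0 dotA1 /dot.
rewrite -!big_split /=; apply: eq_bigr => y _; rewrite !big_bool /=; lra.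
Qed.

Lemma dot_ext (v X Y : vec4 R n) : (forall y d z, X y d z = Y y d z) -> dot v X = dot v Y.
Proof.
move=> h; apply: eq_bigr => y _; apply: eq_bigr => d _; apply: eq_bigr => z _; by rewrite h.
Qed.

Lemma obs_scale (W : fdW) (k : bool -> R) y d z :
  obs (fun a b c e z => W a b c e * k z) y d z = E W y d z * k z.
Proof.
rewrite /E /obs mulr_suml; apply: eq_bigr => a _; rewrite mulr_suml; apply: eq_bigr => b _.
rewrite mulr_suml; apply: eq_bigr => c _; rewrite mulr_suml; apply: eq_bigr => e _.
by case: ifP; rewrite ?mul0r.
Qed.

Lemma obs_ext (q q' : fdlaw R n) : (forall a b c e z, q a b c e z = q' a b c e z) ->
  forall y d z, obs q y d z = obs q' y d z.
Proof.
move=> h y d z; apply: eq_bigr => a _; apply: eq_bigr => b _; apply: eq_bigr => c _;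
apply: eq_bigr => e _; by rewrite h.
Qed.

Lemma obs_valid (q : fdlaw R n) : rand_assign q ->
  forall y d z, obs q y d z = E (pU q) y d z * pZ q z.
Proof.
move=> hr y d z; rewrite -obs_scale; apply: obs_ext => a b c e z'; exact: hr.
Qed.

Lemma pvec_valid (q : fdlaw R n) : rand_assign q -> forall z, 0 < pZ q z ->
  forall y d, pvec q y d z = E (pU q) y d z.
Proof.
move=> hr z hz y d; rewrite /pvec obs_valid // mulfK //; exact: lt0r_neq0.
Qed.

Lemma ATE_pU (gam : nat -> R) (q : fdlaw R n) :
  ATE gam q = sumW (fun a b c e => pU q a b c e * (gam b - gam a)).
Proof.
rewrite /ATE /sumW; apply: eq_bigr => a _; apply: eq_bigr => b _; apply: eq_bigr => c _;
apply: eq_bigr => e _; by rewrite /pU mulr_suml.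
Qed.

Lemma sum_pZ (q : fdlaw R n) : \sum_(z : bool) pZ q z = sumW (pU q).
Proof.
rewrite /pZ /sumW exchange_big; apply: eq_bigr => a _; rewrite exchange_big;
apply: eq_bigr => b _; rewrite exchange_big; apply: eq_bigr => c _;
rewrite exchange_big; by apply: eq_bigr => e _.
Qed.

Lemma sumW_swap (F : fdW) :
  sumW (fun a b c e => F b a (~~ c) (~~ e)) = sumW F.
Proof.
rewrite /sumW exchange_big; apply: eq_bigr => a _; apply: eq_bigr => b _.
rewrite !big_bool /=; lra.
Qed.

Lemma sumW_E (W : fdW) :
  sumW W = \sum_(y < n) (E W y false false + E W y true false).
Proof.
rewrite big_split /=.
transitivity (\sum_(a < n) \sum_(b < n) \sum_(d1 : bool) W a b false d1 +
              \sum_(b < n) \sum_(a < n) \sum_(d1 : bool) W a b true d1).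
- rewrite [X in _ + X]exchange_big -big_split; apply: eq_bigr => a _.
  rewrite -big_split; apply: eq_bigr => b _; rewrite !big_bool /=; lra.
- congr (_ + _); apply: eq_bigr => y _; by rewrite /E ?obs00 ?obs10.
Qed.

End Sums.

Section Swap.
Variable R : realFieldType.
Variable n : nat.

Definition swapq (q : fdlaw R n) : fdlaw R n := fun a b c e z => q b a (~~ c) (~~ e) z.

Lemma sumW_opp (F : fdW R n) : sumW (fun a b c e => - F a b c e) = - sumW F.
Proof.
rewrite /sumW -sumrN; apply: eq_bigr => a _; rewrite -sumrN; apply: eq_bigr => b _;
rewrite -sumrN; apply: eq_bigr => c _; by rewrite -sumrN.
Qed.

Lemma pZ_swap (q : fdlaw R n) z : pZ (swapq q) z = pZ q z.
Proof. exact: (sumW_swap (fun a b c e => q a b c e z)). Qed.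

Lemma valid_swap (q : fdlaw R n) : valid_law q -> valid_law (swapq q).
Proof.
move=> [[h0 h1] hr]; split; [split|].
- by move=> *; apply: h0.
- rewrite -h1; exact: (sumW_swap (pU q)).
- move=> a b c e z; rewrite /swapq hr pZ_swap //.
Qed.

Lemma obs_swap (q : fdlaw R n) y d z : obs (swapq q) y d z = obs q y (~~ d) z.
Proof.
case: d; case: z => /=.
- rewrite obs11 obs01; apply: eq_bigr => a _; rewrite /swapq !big_bool /=; lra.
- rewrite obs10 obs00; apply: eq_bigr => a _; rewrite /swapq !big_bool /=; lra.
- rewrite obs01 obs11; apply: eq_bigr => a _; rewrite /swapq !big_bool /=; lra.
- rewrite obs00 obs10; apply: eq_bigr => a _; rewrite /swapq !big_bool /=; lra.
Qed.

Lemma pvec_swap (q : fdlaw R n) y d z : pvec (swapq q) y d z = pbar q y d z.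
Proof. by rewrite /pvec /pbar obs_swap pZ_swap. Qed.

Lemma ATE_swap (gam : nat -> R) (q : fdlaw R n) : ATE gam (swapq q) = - ATE gam q.
Proof.
rewrite !ATE_pU -sumW_opp.
rewrite -(sumW_swap (fun a b c e => - (pU q a b c e * (gam b - gam a)))).
apply: eq_bigr => a _; apply: eq_bigr => b _; apply: eq_bigr => c _; apply: eq_bigr => e _.
rewrite /pU /swapq /= ?negbK; lra.
Qed.

End Swap.

Section Valid.
Variable R : realFieldType.
Variable m : nat.
Local Notation n := m.+1.
Variable gam : nat -> R.
Hypothesis gmono : forall i j : nat, (i <= j)%N -> (j < n)%N -> gam i <= gam j.

Lemma g0i (a : 'I_n) : gam 0 <= gam a.
Proof. exact: gmono. Qed.
Lemma gim (a : 'I_n) : gam a <= gam m.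
Proof. exact: gmono (leq_ord a) (ltnSn m). Qed.

Lemma cv_S1 (B : bmat n) t : inS1 B t ->
  forall a b c e, cv (uvec gam B (- gam 0 - gam t)) a b c e <= gam b - gam a.
Proof.
move=> [ht [Hge [Hlt [Hx _]]]] a b c e.
have htn : (t < n)%N by lia.
have := g0i a; have := g0i b; have := gim a; have := gim b.
have := gmono (leq0n t) htn; have := gmono (leqnSn t) (leq_trans ht (leqnn _)).
have := gmono (_ : (t <= m)%N) (ltnSn m) => /(_ ltac:(lia)).
rewrite /cv /uvec; case: c; case: e => /=.
- move: (Hx b); case: (B b true false); case: (B b true true) => //= *; lra.
- case: (leqP t a) => hta.
  + move: (Hge a hta) => /andP[_ ->].
    have := gmono hta (ltn_ord a).
    case: (B b true false) => *; lra.
  + have := gmono (ltnW hta) htn.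
    case: (B b true false); case: (B a false true) => *; lra.
- case: (leqP t a) => hta.
  + move: (Hge a hta) => /andP[-> _].
    have := gmono hta (ltn_ord a).
    case: (B b true true) => *; lra.
  + have := gmono (ltnW hta) htn.
    case: (B b true true); case: (B a false false) => *; lra.
- case: (leqP t a) => hta.
  + move: (Hge a hta) => /andP[-> ->].
    have := gmono hta (ltn_ord a) => *; lra.
  + move: (Hlt a hta); case: (B a false false); case: (B a false true) => //= *; lra.
Qed.

Lemma cv_S2 (B : bmat n) : inS2 B ->
  forall a b c e, cv (uvec gam B (- gam 0 - gam m)) a b c e <= gam b - gam a.
Proof.
move=> [H0 [H1 [H2 H3]]] a b c e.
have := g0i a; have := g0i b; have := gim a; have := gim b.
rewrite /cv /uvec; case: c; case: e => /=.
- case: (ltnP 0 b) => hb.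
  + move: (H3 b hb); case: (B b true false); case: (B b true true) => //= *; lra.
  + have hb0 : (b : nat) = 0%N by lia.
    move: (H1 b hb0) => /andP[-> ->]; rewrite hb0 => *; lra.
- case: (B b true false); case: (B a false true) => *; lra.
- case: (B b true true); case: (B a false false) => *; lra.
- case: (ltnP a m) => ha.
  + move: (H2 a ha); case: (B a false false); case: (B a false true) => //= *; lra.
  + have ham : (a : nat) = m by move: (ltn_ord a); lia.
    move: (H0 a ham) => /andP[-> ->]; rewrite ham => *; lra.
Qed.

Lemma cv_S3 (B : bmat n) t : inS3 B t ->
  forall a b c e, cv (uvec gam B (- gam t - gam m)) a b c e <= gam b - gam a.
Proof.
move=> [ht0 [htm [Hle [Hgt [Hx _]]]]] a b c e.
have htn : (t < n)%N by lia.
have := g0i a; have := g0i b; have := gim a; have := gim b.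
have := gmono (leq0n t) htn; have := gmono htm (ltnSn m).
rewrite /cv /uvec; case: c; case: e => /=.
- case: (leqP b t) => hb.
  + move: (Hle b hb) => /andP[-> ->]; have := gmono hb htn => *; lra.
  + move: (Hgt b hb); case: (B b true false); case: (B b true true) => //= *; lra.
- case: (leqP b t) => hb.
  + move: (Hle b hb) => /andP[-> _]; case: (B a false true) => *; lra.
  + have := gmono (ltnW hb) (ltn_ord b).
    case: (B b true false); case: (B a false true) => *; lra.
- case: (leqP b t) => hb.
  + move: (Hle b hb) => /andP[_ ->]; case: (B a false false) => *; lra.
  + have := gmono (ltnW hb) (ltn_ord b).
    case: (B b true true); case: (B a false false) => *; lra.
- move: (Hx a); case: (B a false false); case: (B a false true) => //= *; lra.
Qed.

Lemma cv_V (v : vec4 R n) : inV gam v ->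
  forall a b c e, cv v a b c e <= gam b - gam a.
Proof.
move=> [B [[t [hS hv]] | [[hS hv] | [t [hS hv]]]]] a b c e.
- rewrite /cv !hv; exact: cv_S1.
- rewrite /cv !hv; exact: cv_S2.
- rewrite /cv !hv; exact: cv_S3.
Qed.

End Valid.

Definition mkB (n : nat) (t0' s1 : nat) (s0f s1f : 'I_n -> bool) : bmat n :=
  fun y d z => if d then ((y < s1)%N || (if z then ~~ s1f y else s1f y))
               else ((t0' <= y)%N || (if z then ~~ s0f y else s0f y)).

Section CvLemmas.
Variable R : realFieldType.
Variable m : nat.
Local Notation n := m.+1.
Variable gam : nat -> R.
Variable B : bmat n.
Variable al : R.

Lemma cvC a b : B a false false -> B b true true ->
  cv (uvec gam B al) a b false true = gam b - gam a.
Proof. by rewrite /cv /uvec /= => -> ->; lra. Qed.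
Lemma cvF a b : B b true false -> B a false true ->
  cv (uvec gam B al) a b true false = gam b - gam a.
Proof. by rewrite /cv /uvec /= => -> ->; lra. Qed.
Lemma cvN1 a b : B a false false != B a false true ->
  cv (uvec gam B al) a b false false = gam 0 - gam a.
Proof. by rewrite /cv /uvec /=; case: (B a false false); case: (B a false true) => //= _; lra. Qed.
Lemma cvN2 a b : B a false false -> B a false true ->
  cv (uvec gam B al) a b false false = - gam a - al - gam a.
Proof. by rewrite /cv /uvec /= => -> ->; lra. Qed.
Lemma cvA1 a b : B b true false != B b true true ->
  cv (uvec gam B al) a b true true = gam b - gam m.
Proof. by rewrite /cv /uvec /=; case: (B b true false); case: (B b true true) => //= _; lra. Qed.
Lemma cvA2 a b : B b true false -> B b true true ->
  cv (uvec gam B al) a b true true = gam b + (gam b + al).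
Proof. by rewrite /cv /uvec /= => -> ->. Qed.

End CvLemmas.

Lemma min_neq_l (R : realFieldType) (x y : R) : Num.min x y != x -> y < x.
Proof. move=> h; rewrite ltNge; apply/negP => hxy; move: h; by rewrite min_l // eqxx. Qed.
Lemma min_neq_r (R : realFieldType) (x y : R) : Num.min x y != y -> ~~ (y < x).
Proof. move=> h; apply/negP => hxy; move: h; by rewrite min_r ?ltW // eqxx. Qed.

Lemma sum_nz (R : realFieldType) (n : nat) (f : 'I_n -> R) : \sum_i f i != 0 -> exists i, f i != 0.
Proof.
move=> h; case: (pickP (fun i => f i != 0)) => [i hi|hall]; first by exists i.
move: h; rewrite big1 ?eqxx // => i _; by move: (hall i) => /= /negbFE /eqP.
Qed.

Section MkB.
Variable n : nat.
Variables (t0' s1 : nat) (s0f s1f : 'I_n -> bool).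
Lemma mkB_1lo (y : 'I_n) (z : bool) : (y < s1)%N -> mkB t0' s1 s0f s1f y true z.
Proof. by rewrite /mkB => ->. Qed.
Lemma mkB_1hi (y : 'I_n) (z : bool) : (s1 <= y)%N -> mkB t0' s1 s0f s1f y true z = (if z then ~~ s1f y else s1f y).
Proof. by move=> h; rewrite /mkB /= ltnNge h. Qed.
Lemma mkB_0hi (y : 'I_n) (z : bool) : (t0' <= y)%N -> mkB t0' s1 s0f s1f y false z.
Proof. by rewrite /mkB => ->. Qed.
Lemma mkB_0lo (y : 'I_n) (z : bool) : (y < t0')%N -> mkB t0' s1 s0f s1f y false z = (if z then ~~ s0f y else s0f y).
Proof. by move=> h; rewrite /mkB /= leqNgt h. Qed.
End MkB.

Section MkBS.
Variable m : nat.
Local Notation n := m.+1.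

Lemma inS2_mkB (s0f s1f : 'I_n -> bool) : inS2 (mkB m 1 s0f s1f).
Proof.
split; [|split; [|split]].
- move=> i hi; have h : (m <= i)%N by rewrite hi.
  by rewrite !mkB_0hi.
- move=> i hi; have h : (i < 1)%N by rewrite hi.
  by rewrite !mkB_1lo.
- move=> i hi; rewrite !mkB_0lo //=; by case: (s0f i).
- move=> j hj; rewrite !mkB_1hi //=; by case: (s1f j).
Qed.

Lemma inS1_mkB (s0f s1f : 'I_n -> bool) t : (t < m)%N ->
  (exists i, s1f i) -> (exists j, ~~ s1f j) -> inS1 (mkB t 0 s0f s1f) t.
Proof.
move=> ht [i hi] [j hj]; split; [lia|split; [|split; [|split]]].
- by move=> k hk; rewrite !mkB_0hi.
- move=> k hk; rewrite !mkB_0lo //=; by case: (s0f k).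
- move=> k; rewrite !mkB_1hi //=; by case: (s1f k).
- by exists i, j; rewrite !mkB_1hi //= hi hj.
Qed.

Lemma inS3_mkB (s0f s1f : 'I_n -> bool) t : (0 < t)%N -> (t <= m)%N ->
  (exists i, s0f i) -> (exists j, ~~ s0f j) -> inS3 (mkB n t.+1 s0f s1f) t.
Proof.
move=> ht htm [i hi] [j hj]; split; [done|split; [done|split; [|split; [|split]]]].
- by move=> k hk; rewrite !mkB_1lo.
- move=> k hk; rewrite !mkB_1hi //=; by case: (s1f k).
- move=> k; rewrite !mkB_0lo //=; by case: (s0f k).
- by exists i, j; rewrite !mkB_0lo //= hi hj.
Qed.
End MkBS.

Section Construct.
Variable R : realFieldType.
Variable m : nat.
Local Notation n := m.+1.
Variable gam : nat -> R.
Hypothesis gmono : forall i j : nat, (i <= j)%N -> (j < n)%N -> gam i <= gam j.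
Variable W0 : fdW R n.
Hypothesis hW0 : forall a b c e, 0 <= W0 a b c e.
Hypothesis hS : sumW W0 = 1.

Definition p00 (y : 'I_n) := E W0 y false false.
Definition p01 (y : 'I_n) := E W0 y false true.
Definition p10 (y : 'I_n) := E W0 y true false.
Definition p11 (y : 'I_n) := E W0 y true true.

Lemma p00E y : p00 y = \sum_(b < n) (W0 y b false true + W0 y b false false).
Proof. by rewrite /p00 /E obs00; apply: eq_bigr => b _; rewrite big_bool. Qed.
Lemma p01E y : p01 y = \sum_(b < n) (W0 y b true false + W0 y b false false).
Proof. by rewrite /p01 /E obs01; apply: eq_bigr => b _; rewrite big_bool. Qed.
Lemma p10E y : p10 y = \sum_(a < n) (W0 a y true true + W0 a y true false).
Proof. by rewrite /p10 /E obs10; apply: eq_bigr => b _; rewrite big_bool. Qed.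
Lemma p11E y : p11 y = \sum_(a < n) (W0 a y true true + W0 a y false true).
Proof. by rewrite /p11 /E obs11; apply: eq_bigr => b _; rewrite big_bool. Qed.

Definition N0 := \sum_(a < n) \sum_(b < n) W0 a b false false.
Definition A0 := \sum_(a < n) \sum_(b < n) W0 a b true true.
Definition C0 := \sum_(a < n) \sum_(b < n) W0 a b false true.
Definition F0 := \sum_(a < n) \sum_(b < n) W0 a b true false.

Lemma sum2_ge0 c e : 0 <= \sum_(a < n) \sum_(b < n) W0 a b c e.
Proof. by apply: sumr_ge0 => a _; apply: sumr_ge0 => b _. Qed.

Lemma sumW0E : sumW W0 = A0 + F0 + C0 + N0.
Proof.
rewrite /sumW /A0 /F0 /C0 /N0 -!big_split; apply: eq_bigr => a _.
rewrite -!big_split; apply: eq_bigr => b _; rewrite !big_bool /=; lra.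
Qed.

Definition pi0 := \sum_(y < n) p00 y.
Definition pi1 := \sum_(y < n) p01 y.

Lemma pi0E : pi0 = C0 + N0.
Proof. by rewrite /pi0 /C0 /N0 -big_split; apply: eq_bigr => a _; rewrite p00E big_split. Qed.
Lemma pi1E : pi1 = F0 + N0.
Proof. by rewrite /pi1 /F0 /N0 -big_split; apply: eq_bigr => a _; rewrite p01E big_split. Qed.
Lemma s10E : \sum_(y < n) p10 y = A0 + F0.
Proof.
transitivity (\sum_(b < n) \sum_(a < n) W0 a b true true + \sum_(b < n) \sum_(a < n) W0 a b true false).
- rewrite -big_split; apply: eq_bigr => b _; by rewrite p10E big_split.
- by rewrite [X in X + _]exchange_big [X in _ + X]exchange_big.
Qed.
Lemma s11E : \sum_(y < n) p11 y = A0 + C0.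
Proof.
transitivity (\sum_(b < n) \sum_(a < n) W0 a b true true + \sum_(b < n) \sum_(a < n) W0 a b false true).
- rewrite -big_split; apply: eq_bigr => b _; by rewrite p11E big_split.
- by rewrite [X in X + _]exchange_big [X in _ + X]exchange_big.
Qed.

Lemma p00_ge0 y : 0 <= p00 y.
Proof. rewrite p00E; apply: sumr_ge0 => b _; apply: addr_ge0; exact: hW0. Qed.
Lemma p01_ge0 y : 0 <= p01 y.
Proof. rewrite p01E; apply: sumr_ge0 => b _; apply: addr_ge0; exact: hW0. Qed.
Lemma p10_ge0 y : 0 <= p10 y.
Proof. rewrite p10E; apply: sumr_ge0 => b _; apply: addr_ge0; exact: hW0. Qed.
Lemma p11_ge0 y : 0 <= p11 y.
Proof. rewrite p11E; apply: sumr_ge0 => b _; apply: addr_ge0; exact: hW0. Qed.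

Definition m0 (y : 'I_n) := Num.min (p00 y) (p01 y).
Definition m1 (y : 'I_n) := Num.min (p10 y) (p11 y).
Definition M0 := \sum_(y < n) m0 y.
Definition M1 := \sum_(y < n) m1 y.
Definition cc := pi0 + pi1 - 1.

Lemma m0_ge0 y : 0 <= m0 y.
Proof. by rewrite /m0 le_min p00_ge0 p01_ge0. Qed.
Lemma m1_ge0 y : 0 <= m1 y.
Proof. by rewrite /m1 le_min p10_ge0 p11_ge0. Qed.
Lemma m0_le00 y : m0 y <= p00 y.
Proof. by rewrite /m0 ge_min lexx. Qed.
Lemma m0_le01 y : m0 y <= p01 y.
Proof. by rewrite /m0 ge_min lexx orbT. Qed.
Lemma m1_le10 y : m1 y <= p10 y.
Proof. by rewrite /m1 ge_min lexx. Qed.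
Lemma m1_le11 y : m1 y <= p11 y.
Proof. by rewrite /m1 ge_min lexx orbT. Qed.

Lemma N0_le : N0 <= M0.
Proof.
apply: ler_sum => a _; rewrite /m0 le_min; apply/andP; split.
- rewrite p00E; apply: ler_sum => b _; rewrite lerDr; exact: hW0.
- rewrite p01E; apply: ler_sum => b _; rewrite lerDr; exact: hW0.
Qed.

Lemma A0_le : A0 <= M1.
Proof.
rewrite /A0 exchange_big; apply: ler_sum => a _; rewrite /m1 le_min; apply/andP; split.
- rewrite p10E; apply: ler_sum => b _; rewrite lerDl; exact: hW0.
- rewrite p11E; apply: ler_sum => b _; rewrite lerDl; exact: hW0.
Qed.

Lemma ccE : cc = N0 - A0.
Proof. rewrite /cc pi0E pi1E; move: hS; rewrite sumW0E; lra. Qed.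

Lemma F1 : cc <= M0.
Proof. rewrite ccE; have := N0_le; have := sum2_ge0 true true; rewrite -/A0; lra. Qed.
Lemma F2 : - cc <= M1.
Proof. rewrite ccE; have := A0_le; have := sum2_ge0 false false; rewrite -/N0; lra. Qed.

Lemma s00_10 : pi0 + \sum_(y < n) p10 y = 1.
Proof. rewrite pi0E s10E; move: hS; rewrite sumW0E; lra. Qed.
Lemma s01_11 : pi1 + \sum_(y < n) p11 y = 1.
Proof. rewrite pi1E s11E; move: hS; rewrite sumW0E; lra. Qed.


Definition caseI := M1 + cc <= M0.
Definition aa := if caseI then M1 else M0 - cc.
Definition NN := aa + cc.

Lemma M0_ge0 : 0 <= M0. Proof. apply: sumr_ge0 => y _; exact: m0_ge0. Qed.
Lemma M1_ge0 : 0 <= M1. Proof. apply: sumr_ge0 => y _; exact: m1_ge0. Qed.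

Lemma aa_ge0 : 0 <= aa.
Proof. rewrite /aa; case: ifP => _; [exact: M1_ge0 | have := F1; lra]. Qed.
Lemma NN_ge0 : 0 <= NN.
Proof. rewrite /NN /aa; case: ifP => _; [have := F2; lra | have := M0_ge0; lra]. Qed.
Lemma aa_le : aa <= M1.
Proof. rewrite /aa /caseI; case: ifP => h; [lra | move/negbT: h; rewrite -ltNge; lra]. Qed.
Lemma NN_le : NN <= M0.
Proof. rewrite /NN /aa /caseI; case: ifP => h; lra. Qed.

Definition S0le k := \sum_(i < n | (i <= k)%N) m0 i.
Definition S0lt k := \sum_(i < n | (i < k)%N) m0 i.
Definition S1ge k := \sum_(i < n | (k <= i)%N) m1 i.
Definition S1gt k := \sum_(i < n | (k < i)%N) m1 i.

Lemma sum_if_eqn (F : 'I_n -> R) k (hk : (k < n)%N) :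
  \sum_(i < n) (if (i : nat) == k then F i else 0) = F (Ordinal hk).
Proof. exact: (sum_if_eq (Ordinal hk)). Qed.

Lemma S0_split k (hk : (k < n)%N) : S0le k = S0lt k + m0 (Ordinal hk).
Proof.
rewrite /S0le /S0lt -(sum_if_eqn _ hk) [LHS]big_mkcond [X in X + _]big_mkcond -big_split /=.
apply: eq_bigr => i _ /=.
case: ifP => h1; case: ifP => h2; case: ifP => h3; rewrite ?addr0 ?add0r //; exfalso; lia.
Qed.

Lemma S1_split k (hk : (k < n)%N) : S1ge k = S1gt k + m1 (Ordinal hk).
Proof.
rewrite /S1ge /S1gt -(sum_if_eqn _ hk) [LHS]big_mkcond [X in X + _]big_mkcond -big_split /=.
apply: eq_bigr => i _ /=.
case: ifP => h1; case: ifP => h2; case: ifP => h3; rewrite ?addr0 ?add0r //; exfalso; lia.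
Qed.

Lemma S0le_m : S0le m = M0.
Proof. by rewrite /S0le /M0; apply: eq_bigl => i; rewrite leq_ord. Qed.
Lemma S1ge_0 : S1ge 0 = M1.
Proof. by rewrite /S1ge /M1; apply: eq_bigl => i. Qed.

Lemma t0_ex : exists k, (m <= k)%N || (NN <= S0le k).
Proof. by exists m; rewrite leqnn. Qed.
Definition t0 := ex_minn t0_ex.

Lemma t0_prop : [/\ (t0 <= m)%N, NN <= S0le t0 & forall k, (k < t0)%N -> S0le k < NN].
Proof.
rewrite /t0; case: ex_minnP => t ht hmin; split.
- by apply: hmin; rewrite leqnn.
- case/orP: ht => // hm; have -> : t = m by have := hmin m; rewrite leqnn /=; lia.
  rewrite S0le_m; exact: NN_le.
- move=> k hk; rewrite ltNge; apply/negP => hN.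
  have := hmin k; rewrite hN orbT => /(_ isT); lia.
Qed.

Lemma S0lt_le : S0lt t0 <= NN.
Proof.
have [_ _ hmin] := t0_prop.
case: (posnP t0) => h.
- rewrite /S0lt big_pred0 ?h //; exact: NN_ge0.
- have -> : S0lt t0 = S0le t0.-1.
    by rewrite /S0lt /S0le; apply: eq_bigl => i; apply/idP/idP; lia.
  apply: ltW; apply: hmin; lia.
Qed.

Definition P1 k := (k <= m)%N && ((k == 0)%N || (aa <= S1ge k)).
Lemma t1_ex : exists k, P1 k.
Proof. by exists 0%N. Qed.
Lemma t1_ub : forall k, P1 k -> (k <= m)%N.
Proof. by move=> k /andP[]. Qed.
Definition t1 := ex_maxn t1_ex t1_ub.

Lemma t1_prop : [/\ (t1 <= m)%N, aa <= S1ge t1 &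
   forall k, (t1 < k)%N -> (k <= m)%N -> S1ge k < aa].
Proof.
rewrite /t1; case: ex_maxnP => t /andP[htm ht] hmax; split => //.
- case/orP: ht => // /eqP ->; rewrite S1ge_0; exact: aa_le.
- move=> k hk hkm; rewrite ltNge; apply/negP => hN.
  have := hmax k; rewrite /P1 hkm hN orbT => /(_ isT); lia.
Qed.

Lemma S1gt_le : S1gt t1 <= aa.
Proof.
have [htm _ hmax] := t1_prop.
case: (ltnP t1 m) => h.
- have -> : S1gt t1 = S1ge t1.+1.
    by rewrite /S1gt /S1ge; apply: eq_bigl => i.
  by apply: ltW; apply: hmax.
- rewrite /S1gt big_pred0 ?aa_ge0 // => i /=; have := leq_ord i; lia.
Qed.

Definition mu0 (y : 'I_n) : R :=
  if caseI then (if (y < t0)%N then m0 y else if (y == t0 :> nat) then NN - S0lt t0 else 0)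
  else m0 y.
Definition mu1 (y : 'I_n) : R :=
  if caseI then m1 y else
  (if (t1 < y)%N then m1 y else if (y == t1 :> nat) then aa - S1gt t1 else 0).

Lemma mu0_bounds y : 0 <= mu0 y <= m0 y.
Proof.
rewrite /mu0; case: ifP => _; last by rewrite lexx m0_ge0.
case: ifP => h1; first by rewrite lexx m0_ge0.
case: ifP => h2; last by rewrite lexx m0_ge0.
have [htm hN _] := t0_prop.
have hk : (t0 < n)%N by lia.
have := S0_split hk; have := S0lt_le.
have -> : Ordinal hk = y by apply: val_inj => /=; apply/eqP; rewrite eq_sym h2.
move=> *; apply/andP; split; lra.
Qed.

Lemma mu1_bounds y : 0 <= mu1 y <= m1 y.
Proof.
rewrite /mu1; case: ifP => _; first by rewrite lexx m1_ge0.
case: ifP => h1; first by rewrite lexx m1_ge0.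
case: ifP => h2; last by rewrite lexx m1_ge0.
have [htm hN _] := t1_prop.
have hk : (t1 < n)%N by lia.
have := S1_split hk; have := S1gt_le.
have -> : Ordinal hk = y by apply: val_inj => /=; apply/eqP; rewrite eq_sym h2.
move=> *; apply/andP; split; lra.
Qed.

Lemma sum_mu0 : \sum_(y < n) mu0 y = NN.
Proof.
rewrite /mu0; case hc: caseI; last by rewrite /NN /aa hc; rewrite /M0; lra.
have [htm _ _] := t0_prop.
have hk : (t0 < n)%N by lia.
transitivity (S0lt t0 + \sum_(i < n) (if (i : nat) == t0 then NN - S0lt t0 else 0)).
- set r := NN - S0lt t0; rewrite /S0lt [in RHS]big_mkcond -big_split; apply: eq_bigr => i _ /=.
  case: ifP => h1; first by rewrite (_ : (i == t0 :> nat) = false) ?addr0 //; apply/negbTE; lia.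
  by rewrite add0r.
- rewrite (sum_if_eqn (fun _ => NN - S0lt t0) hk); lra.
Qed.

Lemma sum_mu1 : \sum_(y < n) mu1 y = aa.
Proof.
rewrite /mu1; case hc: caseI; first by rewrite /aa hc.
have [htm _ _] := t1_prop.
have hk : (t1 < n)%N by lia.
transitivity (S1gt t1 + \sum_(i < n) (if (i : nat) == t1 then aa - S1gt t1 else 0)).
- set r := aa - S1gt t1; rewrite /S1gt [in RHS]big_mkcond -big_split; apply: eq_bigr => i _ /=.
  case: ifP => h1; first by rewrite (_ : (i == t1 :> nat) = false) ?addr0 //; apply/negbTE; lia.
  by rewrite add0r.
- rewrite (sum_if_eqn (fun _ => aa - S1gt t1) hk); lra.
Qed.


Definition Cm := 1 - pi1 - aa.
Definition Fm := 1 - pi0 - aa.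

Lemma sumC0 : \sum_(y < n) (p00 y - mu0 y) = Cm.
Proof. rewrite sumrB sum_mu0 -/pi0 /Cm /NN /cc; lra. Qed.
Lemma sumC1 : \sum_(y < n) (p11 y - mu1 y) = Cm.
Proof. rewrite sumrB sum_mu1 /Cm; have := s01_11; lra. Qed.
Lemma sumF0 : \sum_(y < n) (p01 y - mu0 y) = Fm.
Proof. rewrite sumrB sum_mu0 -/pi1 /Fm /NN /cc; lra. Qed.
Lemma sumF1 : \sum_(y < n) (p10 y - mu1 y) = Fm.
Proof. rewrite sumrB sum_mu1 /Fm; have := s00_10; lra. Qed.

Lemma d00 y : 0 <= p00 y - mu0 y.
Proof. have /andP[_ h] := mu0_bounds y; have := m0_le00 y; lra. Qed.
Lemma d01 y : 0 <= p01 y - mu0 y.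
Proof. have /andP[_ h] := mu0_bounds y; have := m0_le01 y; lra. Qed.
Lemma d10 y : 0 <= p10 y - mu1 y.
Proof. have /andP[_ h] := mu1_bounds y; have := m1_le10 y; lra. Qed.
Lemma d11 y : 0 <= p11 y - mu1 y.
Proof. have /andP[_ h] := mu1_bounds y; have := m1_le11 y; lra. Qed.

Lemma Cm_ge0 : 0 <= Cm.
Proof. rewrite -sumC1; apply: sumr_ge0 => y _; exact: d11. Qed.
Lemma Fm_ge0 : 0 <= Fm.
Proof. rewrite -sumF1; apply: sumr_ge0 => y _; exact: d10. Qed.

Definition Wst : fdW R n := fun a b c e =>
  match c, e with
  | false, false => if b == ord0 then mu0 a else 0
  | true, true => if a == ord_max then mu1 b else 0
  | false, true => (p00 a - mu0 a) * (p11 b - mu1 b) / Cm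
  | true, false => (p01 a - mu0 a) * (p10 b - mu1 b) / Fm
  end.

Lemma fill_div (f g : 'I_n -> R) K y : (forall i, 0 <= f i) ->
  \sum_i f i = K -> \sum_i g i = K -> f y * (\sum_i g i) / K = f y.
Proof.
move=> hf hsf hsg; rewrite hsg; case: (eqVneq K 0) hsf => [-> | hK] hsf.
- have := @psumr_eq0P _ _ xpredT f (fun i _ => hf i) hsf y isT => ->.
  by rewrite !mul0r.
- by rewrite mulfK.
Qed.

Lemma Wst_ge0 a b c e : 0 <= Wst a b c e.
Proof.
case: c; case: e => /=.
- by case: ifP => _ //; have /andP[] := mu1_bounds b.
- apply: divr_ge0; [apply: mulr_ge0; [exact: d01 | exact: d10] | exact: Fm_ge0].
- apply: divr_ge0; [apply: mulr_ge0; [exact: d00 | exact: d11] | exact: Cm_ge0].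
- by case: ifP => _ //; have /andP[] := mu0_bounds a.
Qed.

Lemma E_Wst y d z : E Wst y d z = E W0 y d z.
Proof.
case: d; case: z; rewrite /E.
- transitivity (p11 y); last by []; rewrite obs11 /=.
  under eq_bigr => a _ do rewrite big_bool /=.
  rewrite big_split /= sum_if_eq -mulr_suml -mulr_suml [_ * (p11 y - _)]mulrC.
  rewrite (fill_div _ d11 sumC1 sumC0); lra.
- transitivity (p10 y); last by []; rewrite obs10 /=.
  under eq_bigr => a _ do rewrite big_bool /=.
  rewrite big_split /= sum_if_eq -mulr_suml -mulr_suml [_ * (p10 y - _)]mulrC.
  rewrite (fill_div _ d10 sumF1 sumF0); lra.
- transitivity (p01 y); last by []; rewrite obs01 /=.
  under eq_bigr => a _ do rewrite big_bool /=.
  rewrite big_split /= sum_if_eq -mulr_suml -mulr_sumr.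
  rewrite (fill_div _ d01 sumF0 sumF1); lra.
- transitivity (p00 y); last by []; rewrite obs00 /=.
  under eq_bigr => a _ do rewrite big_bool /=.
  rewrite big_split /= sum_if_eq -mulr_suml -mulr_sumr.
  rewrite (fill_div _ d00 sumC0 sumC1); lra.
Qed.


Definition sel0 (y : 'I_n) := p01 y < p00 y.
Definition sel1 (y : 'I_n) := p11 y < p10 y.

Lemma mu0_I_lt (y : 'I_n) : caseI -> (y < t0)%N -> mu0 y = m0 y.
Proof. by rewrite /mu0 => -> ->. Qed.
Lemma mu0_I_gt (y : 'I_n) : caseI -> (t0 < y)%N -> mu0 y = 0.
Proof. by rewrite /mu0 => -> h; rewrite ltnNge (ltnW h) /= gtn_eqF. Qed.
Lemma mu0_II (y : 'I_n) : ~~ caseI -> mu0 y = m0 y.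
Proof. by rewrite /mu0 => /negbTE ->. Qed.
Lemma mu1_I (y : 'I_n) : caseI -> mu1 y = m1 y.
Proof. by rewrite /mu1 => ->. Qed.
Lemma mu1_II_gt (y : 'I_n) : ~~ caseI -> (t1 < y)%N -> mu1 y = m1 y.
Proof. by rewrite /mu1 => /negbTE -> ->. Qed.
Lemma mu1_II_lt (y : 'I_n) : ~~ caseI -> (y < t1)%N -> mu1 y = 0.
Proof. by rewrite /mu1 => /negbTE -> h; rewrite ltnNge (ltnW h) /= ltn_eqF. Qed.

Lemma WN (a b : 'I_n) : Wst a b false false != 0 -> b = ord0 /\ mu0 a != 0.
Proof. by rewrite /Wst /=; case: (eqVneq b ord0) => [-> h|_]; [split | rewrite eqxx]. Qed.
Lemma WA (a b : 'I_n) : Wst a b true true != 0 -> a = ord_max /\ mu1 b != 0.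
Proof. by rewrite /Wst /=; case: (eqVneq a ord_max) => [-> h|_]; [split | rewrite eqxx]. Qed.
Lemma WC (a b : 'I_n) : Wst a b false true != 0 -> [/\ p00 a != mu0 a, p11 b != mu1 b & Cm != 0].
Proof.
move=> h; split; apply/eqP => e; move: h; rewrite /Wst /= e.
- by rewrite subrr mul0r mul0r eqxx.
- by rewrite subrr mulr0 mul0r eqxx.
- by rewrite invr0 mulr0 eqxx.
Qed.
Lemma WF (a b : 'I_n) : Wst a b true false != 0 -> [/\ p01 a != mu0 a, p10 b != mu1 b & Fm != 0].
Proof.
move=> h; split; apply/eqP => e; move: h; rewrite /Wst /= e.
- by rewrite subrr mul0r mul0r eqxx.
- by rewrite subrr mulr0 mul0r eqxx.
- by rewrite invr0 mulr0 eqxx.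
Qed.

Lemma sel0_of (a : 'I_n) : p00 a != m0 a -> sel0 a.
Proof. by rewrite /m0 /m1 eq_sym => /min_neq_l. Qed.
Lemma nsel0_of (a : 'I_n) : p01 a != m0 a -> ~~ sel0 a.
Proof. by rewrite /m0 /m1 eq_sym => /min_neq_r. Qed.
Lemma sel1_of (b : 'I_n) : p10 b != m1 b -> sel1 b.
Proof. by rewrite /m0 /m1 eq_sym => /min_neq_l. Qed.
Lemma nsel1_of (b : 'I_n) : p11 b != m1 b -> ~~ sel1 b.
Proof. by rewrite /m0 /m1 eq_sym => /min_neq_r. Qed.

Lemma gord0 : gam (@ord0 m) = gam 0. Proof. by []. Qed.

Lemma T_S2gen (s0f s1f : 'I_n -> bool) :
  (forall a b, Wst a b false true != 0 -> ((m <= a)%N || s0f a) && ((b < 1)%N || ~~ s1f b)) ->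
  (forall a b, Wst a b true false != 0 -> ((b < 1)%N || s1f b) && ((m <= a)%N || ~~ s0f a)) ->
  forall a b c e, Wst a b c e != 0 ->
    cv (uvec gam (mkB m 1 s0f s1f) (- gam 0 - gam m)) a b c e = gam b - gam a.
Proof.
move=> HC HF a b c e; case: c; case: e => hW.
- have [-> _] := WA hW; case: (posnP b) => hb.
  + rewrite cvA2; [|by rewrite mkB_1lo ?hb|by rewrite mkB_1lo ?hb].
    rewrite hb /=; lra.
  + rewrite cvA1; [by [] | rewrite !mkB_1hi //; by case: (s1f b)].
- move: (HF a b hW) => /andP[h1 h2]; exact: cvF.
- move: (HC a b hW) => /andP[h1 h2]; exact: cvC.
- have [-> _] := WN hW; case: (ltnP a m) => ha.
  + rewrite cvN1; [by [] | rewrite !mkB_0lo //; by case: (s0f a)].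
  + have ham : (a : nat) = m by have := ltn_ord a; lia.
    rewrite cvN2; [|by rewrite mkB_0hi|by rewrite mkB_0hi].
    rewrite ham /=; lra.
Qed.

Lemma T_S1 : caseI -> (t0 < m)%N ->
  forall a b c e, Wst a b c e != 0 ->
    cv (uvec gam (mkB t0 0 sel0 sel1) (- gam 0 - gam t0)) a b c e = gam b - gam a.
Proof.
move=> hc ht a b c e; case: c; case: e => hW.
- have [-> _] := WA hW.
  rewrite cvA1; [by [] | rewrite !mkB_1hi //; by case: (sel1 b)].
- have [h1 h2 _] := WF hW.
  apply: cvF; first by rewrite mkB_1hi //=; apply: sel1_of; rewrite -(mu1_I _ hc).
  case: (ltnP a t0) => ha; last by rewrite mkB_0hi.
  by rewrite mkB_0lo //=; apply: nsel0_of; rewrite -(mu0_I_lt hc ha).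
- have [h1 h2 _] := WC hW.
  apply: cvC; last by rewrite mkB_1hi //=; apply: nsel1_of; rewrite -(mu1_I _ hc).
  case: (ltnP a t0) => ha; last by rewrite mkB_0hi.
  by rewrite mkB_0lo //=; apply: sel0_of; rewrite -(mu0_I_lt hc ha).
- have [-> hmu] := WN hW; case: (ltnP a t0) => ha.
  + rewrite cvN1; [by [] | rewrite !mkB_0lo //; by case: (sel0 a)].
  + have hat : (a : nat) = t0.
      case: (ltnP t0 a) => h; first by move: hmu; rewrite mu0_I_gt ?eqxx.
      lia.
    rewrite cvN2; [|by rewrite mkB_0hi|by rewrite mkB_0hi].
    rewrite hat /=; lra.
Qed.

Lemma T_S3 : ~~ caseI -> (0 < t1)%N ->
  forall a b c e, Wst a b c e != 0 ->
    cv (uvec gam (mkB n t1.+1 sel0 sel1) (- gam t1 - gam m)) a b c e = gam b - gam a.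
Proof.
move=> hc ht a b c e; case: c; case: e => hW.
- have [-> hmu] := WA hW; case: (ltnP t1 b) => hb.
  + rewrite cvA1; [by [] | rewrite !mkB_1hi //; by case: (sel1 b)].
  + have hbt : (b : nat) = t1.
      case: (ltnP b t1) => h; first by move: hmu; rewrite mu1_II_lt ?eqxx.
      lia.
    rewrite cvA2; [|by rewrite mkB_1lo ?hbt|by rewrite mkB_1lo ?hbt].
    rewrite hbt /=; lra.
- have [h1 h2 _] := WF hW.
  apply: cvF; last by rewrite mkB_0lo //=; apply: nsel0_of; rewrite -(mu0_II _ hc).
  case: (ltnP t1 b) => hb; last by rewrite mkB_1lo.
  by rewrite mkB_1hi //=; apply: sel1_of; rewrite -(mu1_II_gt hc hb).
- have [h1 h2 _] := WC hW.
  apply: cvC; first by rewrite mkB_0lo //=; apply: sel0_of; rewrite -(mu0_II _ hc).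
  case: (ltnP t1 b) => hb; last by rewrite mkB_1lo.
  by rewrite mkB_1hi //=; apply: nsel1_of; rewrite -(mu1_II_gt hc hb).
- have [-> _] := WN hW.
  rewrite cvN1; [by [] | rewrite !mkB_0lo //; by case: (sel0 a)].
Qed.


Lemma ex_sel1 : caseI -> Fm != 0 -> exists i, sel1 i.
Proof.
move=> hc hF; have hs : \sum_(y < n) (p10 y - mu1 y) != 0 by rewrite sumF1.
have [i hi] := sum_nz hs.
by exists i; apply: sel1_of; rewrite -(mu1_I i hc) -subr_eq0.
Qed.
Lemma ex_nsel1 : caseI -> Cm != 0 -> exists i, ~~ sel1 i.
Proof.
move=> hc hF; have hs : \sum_(y < n) (p11 y - mu1 y) != 0 by rewrite sumC1.
have [i hi] := sum_nz hs.
by exists i; apply: nsel1_of; rewrite -(mu1_I i hc) -subr_eq0.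
Qed.
Lemma ex_sel0 : ~~ caseI -> Cm != 0 -> exists i, sel0 i.
Proof.
move=> hc hF; have hs : \sum_(y < n) (p00 y - mu0 y) != 0 by rewrite sumC0.
have [i hi] := sum_nz hs.
by exists i; apply: sel0_of; rewrite -(mu0_II i hc) -subr_eq0.
Qed.
Lemma ex_nsel0 : ~~ caseI -> Fm != 0 -> exists i, ~~ sel0 i.
Proof.
move=> hc hF; have hs : \sum_(y < n) (p01 y - mu0 y) != 0 by rewrite sumF0.
have [i hi] := sum_nz hs.
by exists i; apply: nsel0_of; rewrite -(mu0_II i hc) -subr_eq0.
Qed.

Lemma S2_HC : (forall a : 'I_n, (a < m)%N -> mu0 a = m0 a) ->
  (forall b : 'I_n, (0 < b)%N -> mu1 b = m1 b) ->
  forall a b, Wst a b false true != 0 -> ((m <= a)%N || sel0 a) && ((b < 1)%N || ~~ sel1 b).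
Proof.
move=> H0 H1 a b hW; have [h1 h2 _] := WC hW; apply/andP; split.
- case: (ltnP a m) => ha //=.
  by apply: sel0_of; rewrite -H0.
- case: (posnP b) => hb; first by rewrite hb.
  have -> : (b < 1)%N = false by lia.
  by apply: nsel1_of; rewrite -H1.
Qed.

Lemma S2_HF : (forall a : 'I_n, (a < m)%N -> mu0 a = m0 a) ->
  (forall b : 'I_n, (0 < b)%N -> mu1 b = m1 b) ->
  forall a b, Wst a b true false != 0 -> ((b < 1)%N || sel1 b) && ((m <= a)%N || ~~ sel0 a).
Proof.
move=> H0 H1 a b hW; have [h1 h2 _] := WF hW; apply/andP; split.
- case: (posnP b) => hb; first by rewrite hb.
  have -> : (b < 1)%N = false by lia.
  by apply: sel1_of; rewrite -H1.
- case: (ltnP a m) => ha //=.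
  by apply: nsel0_of; rewrite -H0.
Qed.

Lemma construct : exists v, inV gam v /\
  forall a b c e, Wst a b c e != 0 -> cv v a b c e = gam b - gam a.
Proof.
have [hF|hF] := eqVneq Fm 0.
  exists (uvec gam (mkB m 1 (fun _ => true) (fun _ => false)) (- gam 0 - gam m)); split.
    by exists (mkB m 1 (fun _ => true) (fun _ => false)); right; left; split => //; exact: inS2_mkB.
  apply: T_S2gen; first by move=> a b _; rewrite !orbT.
  by move=> a b hW; have [_ _] := WF hW; rewrite hF eqxx.
have [hC|hC] := eqVneq Cm 0.
  exists (uvec gam (mkB m 1 (fun _ => false) (fun _ => true)) (- gam 0 - gam m)); split.
    by exists (mkB m 1 (fun _ => false) (fun _ => true)); right; left; split => //; exact: inS2_mkB.
  apply: T_S2gen; last by move=> a b _; rewrite !orbT.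
  by move=> a b hW; have [_ _] := WC hW; rewrite hC eqxx.
have S2case : (forall a : 'I_n, (a < m)%N -> mu0 a = m0 a) ->
  (forall b : 'I_n, (0 < b)%N -> mu1 b = m1 b) -> exists v, inV gam v /\
  forall a b c e, Wst a b c e != 0 -> cv v a b c e = gam b - gam a.
  move=> H0 H1; exists (uvec gam (mkB m 1 sel0 sel1) (- gam 0 - gam m)); split.
    by exists (mkB m 1 sel0 sel1); right; left; split => //; exact: inS2_mkB.
  by apply: T_S2gen; [exact: S2_HC | exact: S2_HF].
have [htm _ _] := t0_prop.
have [htm1 _ _] := t1_prop.
case hc: caseI.
- case: (ltnP t0 m) => ht.
  + exists (uvec gam (mkB t0 0 sel0 sel1) (- gam 0 - gam t0)); split.
      exists (mkB t0 0 sel0 sel1); left; exists t0; split => //.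
      by apply: inS1_mkB => //; [exact: ex_sel1 | exact: ex_nsel1].
    exact: T_S1.
  + apply: S2case => a ha; [apply: mu0_I_lt => //; lia | exact: mu1_I].
- have hc' : ~~ caseI by rewrite hc.
  case: (posnP t1) => ht.
  + apply: S2case => a ha; [exact: mu0_II | apply: mu1_II_gt => //; lia].
  + exists (uvec gam (mkB n t1.+1 sel0 sel1) (- gam t1 - gam m)); split.
      exists (mkB n t1.+1 sel0 sel1); right; right; exists t1; split => //.
      by apply: inS3_mkB => //; [exact: ex_sel0 | exact: ex_nsel0].
    exact: T_S3.
Qed.

End Construct.

Lemma sumW_ext (R : realFieldType) (n : nat) (F G : fdW R n) :
  (forall a b c e, F a b c e = G a b c e) -> sumW F = sumW G.
Proof.
move=> h; apply: eq_bigr => a _; apply: eq_bigr => b _; apply: eq_bigr => c _;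
apply: eq_bigr => e _; exact: h.
Qed.

Lemma sumW_mulr (R : realFieldType) (n : nat) (F : fdW R n) k :
  sumW (fun a b c e => F a b c e * k) = sumW F * k.
Proof.
rewrite /sumW mulr_suml; apply: eq_bigr => a _; rewrite mulr_suml; apply: eq_bigr => b _;
rewrite mulr_suml; apply: eq_bigr => c _; by rewrite mulr_suml.
Qed.

Section Final.
Variable R : realFieldType.
Variable m : nat.
Local Notation n := m.+1.
Variable gam : nat -> R.
Hypothesis gmono : forall i j : nat, (i <= j)%N -> (j < n)%N -> gam i <= gam j.

Lemma pZ_ge0 (q : fdlaw R n) : 0 < pZ q false -> 0 < pZ q true -> forall z, 0 <= pZ q z.
Proof. by move=> h0 h1 [] ; apply: ltW. Qed.

Lemma lower_valid (q : fdlaw R n) : valid_law q -> 0 < pZ q false -> 0 < pZ q true ->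
  forall v, inV gam v -> dot v (pvec q) <= ATE gam q.
Proof.
move=> [[h0 h1] hr] hz0 hz1 v hv.
have hp : forall y d z, pvec q y d z = E (pU q) y d z.
  by move=> y d [] ; apply: pvec_valid.
rewrite (dot_ext v hp) dot_E ATE_pU.
apply: ler_sum => a _; apply: ler_sum => b _; apply: ler_sum => c _; apply: ler_sum => e _.
apply: ler_wpM2l; last exact: cv_V.
by rewrite /pU; apply: sumr_ge0 => z _; exact: h0.
Qed.

Lemma sharp_lower (q : fdlaw R n) : valid_law q -> 0 < pZ q false -> 0 < pZ q true ->
  exists v, inV gam v /\
    (forall w, inV gam w -> dot w (pvec q) <= dot v (pvec q)) /\
    exists q' : fdlaw R n, valid_law q' /\
      (forall y d z, obs q' y d z = obs q y d z) /\ ATE gam q' = dot v (pvec q).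
Proof.
move=> hq hz0 hz1; have [[h0 h1] hr] := hq.
have hW0 : forall a b c e, 0 <= pU q a b c e.
  by move=> a b c e; rewrite /pU; apply: sumr_ge0 => z _; exact: h0.
have hS : sumW (pU q) = 1 := h1.
have [v [hv ht]] := construct gam hS.
set W := Wst (pU q).
have EW : forall y d z, E W y d z = E (pU q) y d z := E_Wst hW0 hS.
have hsZ : \sum_(z : bool) pZ q z = 1 by rewrite sum_pZ.
pose q' : fdlaw R n := fun a b c e z => W a b c e * pZ q z.
have hsW : sumW W = 1.
  rewrite sumW_E -hS sumW_E; apply: eq_bigr => y _; by rewrite !EW.
have hpZ' : forall z, pZ q' z = pZ q z.
  move=> z; change (sumW (fun a b c e => W a b c e * pZ q z) = pZ q z).
  by rewrite (sumW_mulr W (pZ q z)) hsW mul1r.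
have hpU' : forall a b c e, pU q' a b c e = W a b c e.
  by move=> a b c e; rewrite /pU /q' -mulr_sumr hsZ mulr1.
have valid' : valid_law q'.
  split; [split|].
  - move=> a b c e z; apply: mulr_ge0; [exact: Wst_ge0 hW0 hS _ _ _ _ | exact: pZ_ge0].
  - change (sumW (pU q') = 1); rewrite -hsW; exact: sumW_ext.
  - by move=> a b c e z; rewrite hpU' hpZ'.
have hobs : forall y d z, obs q' y d z = obs q y d z.
  by move=> y d z; rewrite obs_scale (obs_valid hr) EW.
have hpv : forall y d z, pvec q y d z = E W y d z.
  move=> y d z; rewrite EW; case: z; [exact: pvec_valid hr _ hz1 y d | exact: pvec_valid hr _ hz0 y d].
have hATE : ATE gam q' = dot v (pvec q).
  rewrite (dot_ext v hpv) dot_E ATE_pU; apply: sumW_ext => a b c e.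
  rewrite hpU'; case: (eqVneq (W a b c e) 0) => [->|hn]; first by rewrite !mul0r.
  by rewrite ht.
exists v; split => //; split.
- move=> w hw; rewrite -hATE.
  have hz0' : 0 < pZ q' false by rewrite hpZ'.
  have hz1' : 0 < pZ q' true by rewrite hpZ'.
  have := lower_valid valid' hz0' hz1' hw.
  suff -> : dot w (pvec q') = dot w (pvec q) by [].
  by apply: dot_ext => y d z; rewrite /pvec hobs hpZ'.
- by exists q'.
Qed.

End Final.

Unset Implicit Arguments.
Unset Strict Implicit.

Theorem theorem2 (R : realFieldType) (n : nat) (gam : nat -> R)
  (hgam : forall i j : nat, (i < j)%N -> (j < n)%N -> gam i < gam j) :
  (* validity: max_{v in V} v'p <= ATE <= - max_{v in V} v'pbar *)
  (forall q : fdlaw R n, valid_law q -> 0 < pZ q false -> 0 < pZ q true ->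
     (forall v, inV gam v -> dot v (pvec q) <= ATE gam q) /\
     (forall v, inV gam v -> ATE gam q <= - dot v (pbar q))) /\
  (* the maxima exist and are sharp *)
  (forall q : fdlaw R n, valid_law q -> 0 < pZ q false -> 0 < pZ q true ->
     (exists v, inV gam v /\
        (forall w, inV gam w -> dot w (pvec q) <= dot v (pvec q)) /\
        exists q' : fdlaw R n, valid_law q' /\
          (forall y d z, obs q' y d z = obs q y d z) /\
          ATE gam q' = dot v (pvec q)) /\
     (exists v, inV gam v /\
        (forall w, inV gam w -> dot w (pbar q) <= dot v (pbar q)) /\
        exists q' : fdlaw R n, valid_law q' /\
          (forall y d z, obs q' y d z = obs q y d z) /\
          ATE gam q' = - dot v (pbar q))).
Proof.
case: n gam hgam => [|m] gam hgam.
  split => q [[_ h1] _]; exfalso; move: h1; rewrite big_ord0 => /eqP;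
  by rewrite eq_sym oner_eq0.
have gmono : forall i j : nat, (i <= j)%N -> (j < m.+1)%N -> gam i <= gam j.
  move=> i j; rewrite leq_eqVlt => /orP [/eqP -> //| hij hj].
  by apply: ltW; apply: hgam.
have hsw : forall q : fdlaw R m.+1, forall v, dot v (pvec (swapq q)) = dot v (pbar q).
  by move=> q v; apply: dot_ext => y d z; exact: pvec_swap.
split => q hq hz0 hz1.
- split; first exact: lower_valid.
  move=> v hv.
  have hz0' : 0 < pZ (swapq q) false by rewrite pZ_swap.
  have hz1' : 0 < pZ (swapq q) true by rewrite pZ_swap.
  have := lower_valid gmono (valid_swap hq) hz0' hz1' hv.
  rewrite ATE_swap hsw; lra.
- split; first exact: sharp_lower.
  have hz0' : 0 < pZ (swapq q) false by rewrite pZ_swap.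
  have hz1' : 0 < pZ (swapq q) true by rewrite pZ_swap.
  have [v [hv [hmax [q'' [hq'' [hobs hA]]]]]] := sharp_lower gmono (valid_swap hq) hz0' hz1'.
  exists v; split => //; split.
  + by move=> w hw; rewrite -!hsw; exact: hmax.
  + exists (swapq q''); split; first exact: valid_swap.
    split.
    * by move=> y d z; rewrite obs_swap hobs obs_swap negbK.
    * by rewrite ATE_swap hA hsw.
Qed.
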